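(* Let $X\neq\emptyset$ be a set, $\Phi$ a nonempty set of bounded functions $X\to\mathbb{R}$ that is compact with respect to $D_\Phi$, and assume $(X,D_X)$ is complete. Let $G$ be a subgroup of $\mathrm{Homeo}_\Phi(X)$, equipped with the pseudo-metric $D_G$. Then $G$ is a topological group with respect to the topology induced by $D_G$ (composition $G\times G\to G$ and inversion $G\to G$ are continuous), and the right action $\Phi\times G\to\Phi$, $(\varphi,g)\mapsto\varphi\circ g$, is continuous (with respect to $D_\Phi$ and $D_G$).
   Context: $D_\Phi(\varphi_1,\varphi_2):=\|\varphi_1-\varphi_2\|_\infty$. $D_X(x_1,x_2):=\sup_{\varphi\in\Phi}|\varphi(x_1)-\varphi(x_2)|$. $\mathrm{Homeo}_\Phi(X)$ is the group of bijections $g:X\to X$ that are homeomorphisms for the topology of $D_X$ and satisfy $\varphi\circ g\in\Phi$ and $\varphi\circ g^{-1}\in\Phi$ for all $\varphi\in\Phi$. For $g_1,g_2\in G$, $D_G(g_1,g_2):=\sup_{\varphi\in\Phi}D_\Phi(\varphi\circ g_1,\varphi\circ g_2)$. *)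

(* Defs.v *)
From Stdlib Require Import Reals Lra List Classical ClassicalEpsilon.
Open Scope R_scope.

(* Supremum of a set of reals: the least upper bound when the set is
   nonempty and bounded above, and 0 otherwise (never used in that case
   for the statement, since all sets involved are bounded and nonempty). *)
Definition Rsup (E : R -> Prop) : R :=
  match excluded_middle_informative (bound E /\ exists x, E x) with
  | left H => proj1_sig (completeness E (proj1 H) (proj2 H))
  | right _ => 0
  end.

Definition DPhi {X : Type} (f1 f2 : X -> R) : R :=
  Rsup (fun r => exists x : X, r = Rabs (f1 x - f2 x)).

Definition DX {X : Type} (Phi : (X -> R) -> Prop) (x1 x2 : X) : R :=
  Rsup (fun r => exists phi, Phi phi /\ r = Rabs (phi x1 - phi x2)).

Definition DG {X : Type} (Phi : (X -> R) -> Prop) (g1 g2 : X -> X) : R :=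
  Rsup (fun r => exists phi, Phi phi /\
          r = DPhi (fun x => phi (g1 x)) (fun x => phi (g2 x))).

Definition bounded_fun {X : Type} (f : X -> R) : Prop :=
  exists M, forall x, Rabs (f x) <= M.

Definition open_in_Phi {X : Type} (Phi : (X -> R) -> Prop)
  (U : (X -> R) -> Prop) : Prop :=
  forall phi, Phi phi -> U phi ->
    exists r, 0 < r /\ forall psi, Phi psi -> DPhi phi psi < r -> U psi.

Definition compact_Phi {X : Type} (Phi : (X -> R) -> Prop) : Prop :=
  forall (I : Type) (U : I -> (X -> R) -> Prop),
    (forall i, open_in_Phi Phi (U i)) ->
    (forall phi, Phi phi -> exists i, U i phi) ->
    exists l : list I, forall phi, Phi phi -> exists i, In i l /\ U i phi.

Definition complete_DX {X : Type} (Phi : (X -> R) -> Prop) : Prop :=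
  forall u : nat -> X,
    (forall eps, 0 < eps -> exists N, forall m n, (N <= m)%nat -> (N <= n)%nat ->
        DX Phi (u m) (u n) < eps) ->
    exists x, forall eps, 0 < eps -> exists N, forall n, (N <= n)%nat ->
        DX Phi (u n) x < eps.

Definition continuous_DX {X : Type} (Phi : (X -> R) -> Prop) (g : X -> X) : Prop :=
  forall x eps, 0 < eps -> exists delta, 0 < delta /\
    forall y, DX Phi x y < delta -> DX Phi (g x) (g y) < eps.

Definition inverse_of {X : Type} (g gi : X -> X) : Prop :=
  (forall x, gi (g x) = x) /\ (forall x, g (gi x) = x).

Definition in_Homeo_Phi {X : Type} (Phi : (X -> R) -> Prop) (g : X -> X) : Prop :=
  exists gi, inverse_of g gi /\
    continuous_DX Phi g /\ continuous_DX Phi gi /\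
    (forall phi, Phi phi -> Phi (fun x => phi (g x)) /\ Phi (fun x => phi (gi x))).

Definition subgroup_Homeo_Phi {X : Type} (Phi : (X -> R) -> Prop)
  (G : (X -> X) -> Prop) : Prop :=
  (forall g, G g -> in_Homeo_Phi Phi g) /\
  G (fun x => x) /\
  (forall g h, G g -> G h -> G (fun x => g (h x))) /\
  (forall g, G g -> exists gi, G gi /\ inverse_of g gi).

(* Main.v *)
Require Import Defs.
From Stdlib Require Import Reals List Classical ClassicalEpsilon Lra.
Open Scope R_scope.

Lemma Rsup_ub (E : R -> Prop) r : bound E -> E r -> r <= Rsup E.
Proof.
  intros Hb Hr. unfold Rsup.
  destruct (excluded_middle_informative _) as [H|H].
  - destruct (completeness E _ _) as [s [Hs1 Hs2]]. simpl. apply Hs1. exact Hr.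
  - exfalso. apply H. split; [exact Hb | exists r; exact Hr].
Qed.

Lemma Rsup_le (E : R -> Prop) b : (exists x, E x) -> (forall r, E r -> r <= b) -> Rsup E <= b.
Proof.
  intros He Hb. unfold Rsup.
  destruct (excluded_middle_informative _) as [H|H].
  - destruct (completeness E _ _) as [s [Hs1 Hs2]]. simpl. apply Hs2. exact Hb.
  - exfalso. apply H. split; [exists b; exact Hb | exact He].
Qed.

Lemma DPhi_pt {X} (f1 f2 : X -> R) x : bounded_fun f1 -> bounded_fun f2 ->
  Rabs (f1 x - f2 x) <= DPhi f1 f2.
Proof.
  intros [M1 H1] [M2 H2]. unfold DPhi. apply Rsup_ub.
  - exists (M1 + M2). intros r [y ->].
    specialize (H1 y); specialize (H2 y).
    pose proof (Rabs_triang (f1 y) (- f2 y)). rewrite Rabs_Ropp in H. unfold Rminus. lra.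
  - exists x; reflexivity.
Qed.

Lemma DPhi_le {X} (f1 f2 : X -> R) b : inhabited X ->
  (forall x, Rabs (f1 x - f2 x) <= b) -> DPhi f1 f2 <= b.
Proof.
  intros [x0] H. unfold DPhi. apply Rsup_le.
  - exists (Rabs (f1 x0 - f2 x0)), x0; reflexivity.
  - intros r [y ->]. apply H.
Qed.

Lemma unif_bound {X} (Phi : (X -> R) -> Prop) :
  (forall phi, Phi phi -> bounded_fun phi) -> compact_Phi Phi ->
  exists B, forall phi, Phi phi -> forall x, Rabs (phi x) <= B.
Proof.
  intros Hbd Hc.
  destruct (Hc nat (fun n psi => exists c, c < INR n /\ forall x, Rabs (psi x) <= c))
    as [l Hl].
  - intros n psi Hpsi [c [Hc1 Hc2]]. exists (INR n - c). split; [lra|].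
    intros psi' Hpsi' Hd. exists (c + DPhi psi psi'). split; [lra|].
    intros x. pose proof (DPhi_pt psi psi' x (Hbd _ Hpsi) (Hbd _ Hpsi')).
    pose proof (Rabs_triang (psi x) (psi' x - psi x)).
    replace (psi x + (psi' x - psi x)) with (psi' x) in H0 by ring.
    rewrite Rabs_minus_sym in H0. specialize (Hc2 x). lra.
  - intros phi Hphi. destruct (Hbd _ Hphi) as [M HM].
    destruct (INR_unbounded M) as [n Hn]. exists n, M. split; [lra|exact HM].
  - assert (Hl2 : exists B, forall i, In i l -> INR i <= B).
    { clear Hl. induction l as [|a l IH].
      - exists 0. intros i [].
      - destruct IH as [B HB]. exists (Rmax (INR a) B). intros i [<-|Hi].
        + apply Rmax_l.
        + eapply Rle_trans; [apply HB; exact Hi| apply Rmax_r]. }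
    destruct Hl2 as [B HB]. exists B. intros phi Hphi x.
    destruct (Hl phi Hphi) as [i [Hi [c [Hc1 Hc2]]]].
    specialize (Hc2 x). specialize (HB i Hi). lra.
Qed.

Section S.
Context {X : Type} (Phi : (X -> R) -> Prop) (B : R) (hX : inhabited X)
  (hne : exists phi, Phi phi)
  (hB : forall phi, Phi phi -> forall x, Rabs (phi x) <= B).

Lemma bdd phi : Phi phi -> bounded_fun phi.
Proof. intros H. exists B. apply hB, H. Qed.

Lemma DG_pt (g1 g2 : X -> X) phi x :
  (forall phi, Phi phi -> Phi (fun x => phi (g1 x)) /\ Phi (fun x => phi (g2 x))) ->
  Phi phi -> Rabs (phi (g1 x) - phi (g2 x)) <= DG Phi g1 g2.
Proof.
  intros Hg Hphi. destruct (Hg _ Hphi) as [H1 H2].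
  eapply Rle_trans.
  - apply (DPhi_pt (fun x => phi (g1 x)) (fun x => phi (g2 x)) x (bdd _ H1) (bdd _ H2)).
  - unfold DG. apply Rsup_ub.
    + exists (B + B). intros r [psi [Hpsi ->]]. destruct (Hg _ Hpsi) as [K1 K2].
      apply DPhi_le; [exact hX|]. intros y.
      pose proof (hB _ K1 y); pose proof (hB _ K2 y); simpl in *.
      pose proof (Rabs_triang (psi (g1 y)) (- psi (g2 y))) as T. rewrite Rabs_Ropp in T.
      unfold Rminus. lra.
    + exists phi. split; [exact Hphi|reflexivity].
Qed.

Lemma DG_le (g1 g2 : X -> X) b :
  (forall phi x, Phi phi -> Rabs (phi (g1 x) - phi (g2 x)) <= b) -> DG Phi g1 g2 <= b.
Proof.
  intros H. unfold DG. apply Rsup_le.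
  - destruct hne as [phi Hphi]. eexists. exists phi. split; [exact Hphi|reflexivity].
  - intros r [psi [Hpsi ->]]. apply DPhi_le; [exact hX|]. intros y. apply H, Hpsi.
Qed.
End S.

Lemma PhiG {X} (Phi : (X -> R) -> Prop) G : subgroup_Homeo_Phi Phi G ->
  forall g, G g -> forall phi, Phi phi -> Phi (fun x => phi (g x)).
Proof.
  intros [H _] g Hg phi Hphi. destruct (H g Hg) as [gi [_ [_ [_ K]]]].
  apply (K phi Hphi).
Qed.

Theorem mainTheorem5 (X : Type) (Phi : (X -> R) -> Prop) (G : (X -> X) -> Prop)
  (hX : inhabited X)
  (hPhi_ne : exists phi, Phi phi)
  (hPhi_bd : forall phi, Phi phi -> bounded_fun phi)
  (hPhi_cpt : compact_Phi Phi)
  (hX_cpl : complete_DX Phi)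
  (hG : subgroup_Homeo_Phi Phi G) :
  (* composition G x G -> G is continuous *)
  (forall g h, G g -> G h ->
     forall eps, 0 < eps -> exists delta, 0 < delta /\
       forall g' h', G g' -> G h' -> DG Phi g g' < delta -> DG Phi h h' < delta ->
         DG Phi (fun x => g (h x)) (fun x => g' (h' x)) < eps) /\
  (* inversion G -> G is continuous *)
  (forall g gi, G g -> G gi -> inverse_of g gi ->
     forall eps, 0 < eps -> exists delta, 0 < delta /\
       forall h hi, G h -> G hi -> inverse_of h hi ->
         DG Phi g h < delta -> DG Phi gi hi < eps) /\
  (* the right action Phi x G -> Phi, (phi, g) |-> phi o g, is continuous *)
  (forall phi g, Phi phi -> G g ->
     forall eps, 0 < eps -> exists delta, 0 < delta /\
       forall psi h, Phi psi -> G h -> DPhi phi psi < delta -> DG Phi g h < delta ->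
         DPhi (fun x => phi (g x)) (fun x => psi (h x)) < eps).
Proof.
  destruct (unif_bound Phi hPhi_bd hPhi_cpt) as [B hB].
  pose proof (PhiG Phi G hG) as PG.
  assert (Hpair : forall g1 g2, G g1 -> G g2 -> forall phi, Phi phi ->
     Phi (fun x => phi (g1 x)) /\ Phi (fun x => phi (g2 x))).
  { intros g1 g2 H1 H2 phi Hphi. split; apply PG; assumption. }
  split; [|split].
  - intros g h Hg Hh eps Heps. exists (eps / 2). split; [lra|].
    intros g' h' Hg' Hh' D1 D2.
    assert (DG Phi (fun x => g (h x)) (fun x => g' (h' x)) <= DG Phi h h' + DG Phi g g').
    { apply (DG_le Phi hX hPhi_ne). intros phi x Hphi.
      pose proof (DG_pt Phi B hX hB h h' (fun y => phi (g y)) x (Hpair h h' Hh Hh')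
                   (PG g Hg phi Hphi)) as E1.
      pose proof (DG_pt Phi B hX hB g g' phi (h' x) (Hpair g g' Hg Hg') Hphi) as E2.
      simpl in E1.
      pose proof (Rabs_triang (phi (g (h x)) - phi (g (h' x))) (phi (g (h' x)) - phi (g' (h' x)))).
      replace (phi (g (h x)) - phi (g (h' x)) + (phi (g (h' x)) - phi (g' (h' x))))
        with (phi (g (h x)) - phi (g' (h' x))) in H by ring.
      lra. }
    lra.
  - intros g gi Hg Hgi [Hg1 Hg2] eps Heps. exists eps. split; [lra|].
    intros h hi Hh Hhi [Hh1 Hh2] D.
    assert (DG Phi gi hi <= DG Phi g h).
    { apply (DG_le Phi hX hPhi_ne). intros phi x Hphi.
      pose proof (DG_pt Phi B hX hB g h (fun y => phi (gi y)) (hi x) (Hpair g h Hg Hh)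
                   (PG gi Hgi phi Hphi)) as E. simpl in E.
      rewrite Hh2, Hg1 in E. rewrite Rabs_minus_sym. exact E. }
    lra.
  - intros phi g Hphi Hg eps Heps. exists (eps / 2). split; [lra|].
    intros psi h Hpsi Hh D1 D2.
    assert (DPhi (fun x => phi (g x)) (fun x => psi (h x)) <= DG Phi g h + DPhi phi psi).
    { apply DPhi_le; [exact hX|]. intros x.
      pose proof (DG_pt Phi B hX hB g h phi x (Hpair g h Hg Hh) Hphi) as E1.
      pose proof (DPhi_pt phi psi (h x) (hPhi_bd _ Hphi) (hPhi_bd _ Hpsi)) as E2.
      pose proof (Rabs_triang (phi (g x) - phi (h x)) (phi (h x) - psi (h x))).
      replace (phi (g x) - phi (h x) + (phi (h x) - psi (h x)))
        with (phi (g x) - psi (h x)) in H by ring.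
      lra. }
    lra.
Qed.
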